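(* For every algebraic type $\tau$, $$\mathsf{CA}_\tau=\mathbb{I}\,\mathsf{RCA}_\tau=\mathbb{I}\,\mathsf{FCA}_\tau=\mathbb{H}\mathbb{S}\mathbb{P}(\mathsf{FiCA}_\tau)=\mathbb{H}\mathbb{S}\mathbb{P}(\mathsf{BLK}_\tau).$$ That is: every clone $\tau$-algebra is isomorphic to a point-relativized functional clone $\tau$-algebra and to a functional clone $\tau$-algebra, and the variety of clone $\tau$-algebras is generated both by its finite dimensional members and by the class of block $\tau$-algebras.
   Context: Let $\omega=\{1,2,3,\dots\}$. Fix an algebraic type $\tau$. A clone $\tau$-algebra is an algebra $\mathbf C=(C,\sigma^{\mathbf C}\ (\sigma\in\tau),q_n^{\mathbf C}\ (n\ge 0),\mathsf e_i^{\mathbf C}\ (i\ge1))$ where each $\mathsf e_i$ is a nullary operation, each $q_n$ has arity $n+1$, and the following identities hold: (C1) $q_n(\mathsf e_i,x_1,\dots,x_n)=x_i$ for $1\le i\le n$; (C2) $q_n(\mathsf e_j,x_1,\dots,x_n)=\mathsf e_j$ for $j>n$; (C3) $q_n(x,\mathsf e_1,\dots,\mathsf e_n)=x$ for $n\ge0$; (C4) $q_k(x,y_1,\dots,y_k)=q_n(x,y_1,\dots,y_k,\mathsf e_{k+1},\dots,\mathsf e_n)$ for $n>k$; (C5) $q_n(q_n(x,y_1,\dots,y_n),z_1,\dots,z_n)=q_n(x,q_n(y_1,z_1,\dots,z_n),\dots,q_n(y_n,z_1,\dots,z_n))$; (C6) $q_n(\sigma(x_1,\dots,x_k),y_1,\dots,y_n)=\sigma(q_n(x_1,y_1,\dots,y_n),\dots,q_n(x_k,y_1,\dots,y_n))$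 for every $\sigma\in\tau$ of arity $k$ and every $n\ge0$. $\mathsf{CA}_\tau$ is the class of clone $\tau$-algebras. An element $a$ is independent of $\mathsf e_n$ if $q_n(a,\mathsf e_1,\dots,\mathsf e_{n-1},\mathsf e_{n+1})=a$, and dependent on $\mathsf e_n$ otherwise. Let $\Gamma(a)=\{i: a\text{ dependent on }\mathsf e_i\}$ and the dimension $\gamma(a)$ be $\omega$ if $\Gamma(a)$ is infinite, $0$ if $\Gamma(a)=\emptyset$, and $\max\Gamma(a)$ otherwise. $\mathbf C$ is finite dimensional if $\gamma(a)<\omega$ for all $a\in C$; $\mathsf{FiCA}_\tau$ is the class of finite dimensional clone $\tau$-algebras. For a set $A$, $r\in A^\omega$ and $a_1,\dots,a_n\in A$, let $r[a_1,\dots,a_n]\in A^\omega$ have $i$-th entry $a_i$ for $i\le n$ and $r_i$ for $i>n$. For a $\tau$-algebra $\mathbf A$, the full functional clone $\tau$-algebra with value domain $\mathbf A$ has universe the set of all functions $A^\omega\to A$ and operations $\mathsf e_i(s)=s_i$, $q_n(\varphi,\psi_1,\dots,\psi_n)(s)=\varphi(s[\psi_1(s),\dots,\psi_n(s)])$, $\sigma(\psi_1,\dots,\psi_n)(s)=\sigma^{\mathbf A}(\psi_1(s),\dots,\psi_n(s))$ for $s\in A^\omega$; its subalgebras (over all $\tau$-algebras $\mathbf A$) form the class $\mathsf{FCA}_\tau$ of functional clone $\tau$-algebras. For $r\in A^\omega$ let $A^\omega_r=\{s\in A^\omega: s_i\neq r_i\text{ for only finitely many }i\}$; the full point-relativized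 functional clone $\tau$-algebra with value domain $\mathbf A$ and thread $r$ has universe all functions $A^\omega_r\to A$ with the same defining formulas (for $s\in A^\omega_r$); its subalgebras form the class $\mathsf{RCA}_\tau$. For a finitary operation $f:A^n\to A$ ($n\ge0$) its top extension is $f^\top:A^\omega\to A$, $f^\top(s)=f(s_1,\dots,s_n)$. $\mathsf{BLK}_\tau$ (block algebras) is the class of subalgebras of full functional clone $\tau$-algebras (with value domain some $\tau$-algebra $\mathbf A$) all of whose elements are top extensions of finitary operations on $A$. $\mathbb I,\mathbb H,\mathbb S,\mathbb P$ denote closure under isomorphic copies, homomorphic images, subalgebras and direct products. *)

(* Defs.v *)
From mathcomp Require Import all_boot.
Set Implicit Arguments.
Unset Strict Implicit.
Unset Printing Implicit Defensive.

(* Conventions: indices are 0-based.  For k : nat, [ce C k] is e_{k+1};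
   a point s : nat -> A of A^omega has i-th entry (1-based) s (i-1). *)

Record alg_type := AlgType { op_sym : Type; arity : op_sym -> nat }.

Record algebra (T : alg_type) := Algebra {
  carrier :> Type;
  interp : forall o : op_sym T, (arity o).-tuple carrier -> carrier }.
Arguments interp {T} _ _ _.

Definition is_hom T (A B : algebra T) (f : A -> B) : Prop :=
  forall o (xs : (arity o).-tuple A), f (interp A o xs) = interp B o (map_tuple f xs).

Definition alg_class T := algebra T -> Prop.

(** Closure operators I, H, S, P (S and P taken up to isomorphism;
    this does not affect H S P). *)
Definition Icl T (K : alg_class T) : alg_class T := fun B =>
  exists A : algebra T, K A /\ exists f : A -> B, is_hom f /\ bijective f.
Definition Hcl T (K : alg_class T) : alg_class T := fun B =>
  exists A : algebra T, K A /\ exists f : A -> B, is_hom f /\ (forall b, exists a, f a = b).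
Definition Scl T (K : alg_class T) : alg_class T := fun B =>
  exists A : algebra T, K A /\ exists f : B -> A, is_hom f /\ injective f.
Definition prod_alg T (I : Type) (A : I -> algebra T) : algebra T :=
  @Algebra T (forall i, A i)
    (fun o xs i => interp (A i) o (map_tuple (fun x => x i) xs)).
Definition Pcl T (K : alg_class T) : alg_class T := fun B =>
  exists (I : Type) (A : I -> algebra T), (forall i, K (A i)) /\
    exists f : prod_alg A -> B, is_hom f /\ bijective f.

Definition clone_sym (t : alg_type) := (op_sym t + (nat + nat))%type.
Definition clone_arity t (o : clone_sym t) : nat :=
  match o with inl s => arity s | inr (inl n) => n.+1 | inr (inr _) => 0 end.
(* inl s = sigma in tau;  inr (inl n) = q_n (arity n+1);  inr (inr k) = e_{k+1} *)
Definition clone_type t : alg_type := @AlgType (clone_sym t) (@clone_arity t).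

Definition cop t (C : algebra (clone_type t)) (s : op_sym t)
  (xs : (arity s).-tuple C) : C := interp C (inl s) xs.
Definition cq t (C : algebra (clone_type t)) (n : nat) (x : C) (ys : n.-tuple C) : C :=
  interp C (inr (inl n)) (cons_tuple x ys).
Definition ce t (C : algebra (clone_type t)) (k : nat) : C :=
  interp C (inr (inr k)) [tuple].
Arguments ce {t} C k.
Arguments cq {t C} n x ys.
Arguments cop {t C} s xs.

Definition CA t : alg_class (clone_type t) := fun C =>
  (forall n (xs : n.-tuple C) (i : 'I_n), cq n (ce C i) xs = tnth xs i) /\
  (forall n (xs : n.-tuple C) (j : nat), n <= j -> cq n (ce C j) xs = ce C j) /\
  (forall n (x : C), cq n x [tuple ce C i | i < n] = x) /\
  (forall k n (x : C) (ys : k.-tuple C), k < n ->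
              cq k x ys = cq n x [tuple nth (ce C i) ys i | i < n]) /\
  (forall n (x : C) (ys zs : n.-tuple C),
              cq n (cq n x ys) zs = cq n x (map_tuple (fun y => cq n y zs) ys)) /\
  (forall (s : op_sym t) (xs : (arity s).-tuple C) n (ys : n.-tuple C),
              cq n (cop s xs) ys = cop s (map_tuple (fun x => cq n x ys) xs)).

(* a is independent of e_{k+1}:  q_{k+1}(a, e_1,...,e_k, e_{k+2}) = a *)
Definition indep t (C : algebra (clone_type t)) (a : C) (k : nat) : Prop :=
  cq k.+1 a [tuple (if i < k then ce C i else ce C k.+1) | i < k.+1] = a.

Definition FiCA t : alg_class (clone_type t) := fun C =>
  CA C /\ forall a : C, exists N, forall k, N <= k -> indep a k.

Definition upd (A : Type) (s : nat -> A) n (xs : n.-tuple A) : nat -> A :=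
  fun k => nth (s k) xs k.

Definition fun_alg t (A : algebra t) (D : (nat -> A) -> Prop)
  (HD : forall s n (xs : n.-tuple A), D s -> D (upd s xs)) : algebra (clone_type t) :=
  @Algebra (clone_type t) ({s | D s} -> A)
   (fun o => match o return (clone_arity o).-tuple ({s | D s} -> A) -> ({s | D s} -> A) with
     | inl sg => fun fs s => interp A sg (map_tuple (fun f => f s) fs)
     | inr (inl n) => fun fs s =>
         thead fs (exist _ (upd (proj1_sig s) (map_tuple (fun f => f s) (behead_tuple fs)))
                          (HD _ _ _ (proj2_sig s)))
     | inr (inr k) => fun _ s => proj1_sig s k
     end).

Lemma upd_True (A : Type) (s : nat -> A) n (xs : n.-tuple A) : True -> True.
Proof. by []. Qed.

Definition full_fca t (A : algebra t) : algebra (clone_type t) :=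
  @fun_alg t A (fun _ => True) (@upd_True A).

Definition rel_dom (A : Type) (r : nat -> A) (s : nat -> A) : Prop :=
  exists N, forall k, N <= k -> s k = r k.

Lemma rel_dom_upd (A : Type) (r : nat -> A) (s : nat -> A) n (xs : n.-tuple A) :
  rel_dom r s -> rel_dom r (upd s xs).
Proof.
case=> N HN; exists (maxn N n) => k Hk; rewrite /upd nth_default.
  by apply: HN; apply: leq_trans Hk; apply: leq_maxl.
by rewrite size_tuple; apply: leq_trans Hk; apply: leq_maxr.
Qed.

Definition full_rca t (A : algebra t) (r : nat -> A) : algebra (clone_type t) :=
  @fun_alg t A (rel_dom r) (@rel_dom_upd A r).
Arguments full_rca {t} A r.
Arguments full_fca {t} A.

Definition FCA t : alg_class (clone_type t) := fun B =>
  exists (A : algebra t) (f : B -> full_fca A), is_hom f /\ injective f.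
Definition RCA t : alg_class (clone_type t) := fun B =>
  exists (A : algebra t) (r : nat -> A) (f : B -> full_rca A r), is_hom f /\ injective f.
Definition BLK t : alg_class (clone_type t) := fun B =>
  exists (A : algebra t) (f : B -> full_fca A), is_hom f /\ injective f /\
    forall b : B, exists n (g : n.-tuple A -> A),
      forall s, f b s = g [tuple proj1_sig s i | i < n].

(* Main.v *)
Require Import Defs.
From mathcomp Require Import all_boot.
From Stdlib Require Import ClassicalEpsilon FunctionalExtensionality PropExtensionality ProofIrrelevance.
Set Implicit Arguments. Unset Strict Implicit. Unset Printing Implicit Defensive.

Lemma sig_eq (T : Type) (P : T -> Prop) (a b : {x | P x}) :
  proj1_sig a = proj1_sig b -> a = b.
Proof. case: a b => [x px] [y py] /= exy; subst y; congr exist; apply: proof_irrelevance. Qed.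

Section Hom.
Variables (t : alg_type) (A B : algebra (clone_type t)) (f : A -> B) (hf : is_hom f).
Lemma hom_ce k : f (ce A k) = ce B k.
Proof. rewrite /ce hf; congr (interp B _ _); exact: tuple0. Qed.
Lemma hom_cq n x (ys : n.-tuple A) : f (cq n x ys) = cq n (f x) (map_tuple f ys).
Proof. rewrite /cq hf; congr (interp B _ _); exact: val_inj. Qed.
Lemma hom_cop s xs : f (cop s xs) = cop s (map_tuple f xs).
Proof. by rewrite /cop hf. Qed.

Lemma map_ce n : map_tuple f [tuple ce A i | i < n] = [tuple ce B i | i < n].
Proof. by apply: eq_from_tnth => i; rewrite tnth_map !tnth_mktuple hom_ce. Qed.
Lemma map_nth_ce k n (ys : k.-tuple A) :
  map_tuple f [tuple nth (ce A i) ys i | i < n] = [tuple nth (ce B i) (map_tuple f ys) i | i < n].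
Proof.
apply: eq_from_tnth => i; rewrite tnth_map !tnth_mktuple.
case: (ltnP i k) => hi.
  by rewrite (nth_map (ce A i)) // size_tuple.
by rewrite !nth_default ?size_tuple ?size_map ?size_tuple // hom_ce.
Qed.
Lemma map_cqt n (ys zs : n.-tuple A) :
  map_tuple f (map_tuple (fun y => cq n y zs) ys) = map_tuple (fun y => cq n y (map_tuple f zs)) (map_tuple f ys).
Proof. by apply: eq_from_tnth => i; rewrite !tnth_map hom_cq. Qed.
Lemma map_cqt' m n (ys : m.-tuple A) (zs : n.-tuple A) :
  map_tuple f (map_tuple (fun y => cq n y zs) ys) = map_tuple (fun y => cq n y (map_tuple f zs)) (map_tuple f ys).
Proof. by apply: eq_from_tnth => i; rewrite !tnth_map hom_cq. Qed.
End Hom.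

Lemma CA_sub t (B : algebra (clone_type t)) (I : Type) (A : I -> algebra (clone_type t))
  (f : forall i, B -> A i) :
  (forall i, is_hom (f i)) -> (forall i, CA (A i)) ->
  (forall x y, (forall i, f i x = f i y) -> x = y) -> CA B.
Proof.
move=> hf hA inj; split; [|split; [|split; [|split; [|split]]]].
- move=> n xs j; apply: inj => i; have [C1 _] := hA i.
  by rewrite (hom_cq (hf i)) (hom_ce (hf i)) C1 tnth_map.
- move=> n xs j hj; apply: inj => i; have [_ [C2 _]] := hA i.
  by rewrite (hom_cq (hf i)) (hom_ce (hf i)) C2.
- move=> n x; apply: inj => i; have [_ [_ [C3 _]]] := hA i.
  by rewrite (hom_cq (hf i)) (map_ce (hf i)) C3.
- move=> k n x ys hk; apply: inj => i; have [_ [_ [_ [C4 _]]]] := hA i.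
  by rewrite !(hom_cq (hf i)) (map_nth_ce (hf i)) (C4 _ n).
- move=> n x ys zs; apply: inj => i; have [_ [_ [_ [_ [C5 _]]]]] := hA i.
  by rewrite !(hom_cq (hf i)) (map_cqt (hf i)) C5.
- move=> s xs n ys; apply: inj => i; have [_ [_ [_ [_ [_ C6]]]]] := hA i.
  by rewrite (hom_cq (hf i)) !(hom_cop (hf i)) (map_cqt' (hf i)) C6.
Qed.

Lemma surj_tuple (A B : Type) (f : A -> B) : (forall b, exists a, f a = b) ->
  forall n (xs : n.-tuple B), exists ys : n.-tuple A, xs = map_tuple f ys.
Proof.
move=> hs; pose g b := proj1_sig (constructive_indefinite_description _ (hs b)).
have gK b : f (g b) = b by rewrite /g; case: constructive_indefinite_description.
move=> n xs; exists (map_tuple g xs); apply: eq_from_tnth => i.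
by rewrite !tnth_map gK.
Qed.

Lemma CA_img t (A B : algebra (clone_type t)) (f : A -> B) :
  is_hom f -> (forall b, exists a, f a = b) -> CA A -> CA B.
Proof.
move=> hf hs [C1 [C2 [C3 [C4 [C5 C6]]]]].
have sT := surj_tuple hs.
split; [|split; [|split; [|split; [|split]]]].
- move=> n xs j; case: (sT _ xs) => ys ->.
  by rewrite -(hom_ce hf) -(hom_cq hf) C1 tnth_map.
- move=> n xs j hj; case: (sT _ xs) => ys ->.
  by rewrite -(hom_ce hf) -(hom_cq hf) C2.
- move=> n x; case: (hs x) => y <-.
  by rewrite -(map_ce hf) -(hom_cq hf) C3.
- move=> k n x ys hk; case: (hs x) => y <-; case: (sT _ ys) => ys' ->.
  by rewrite -(map_nth_ce hf) -!(hom_cq hf) (C4 _ n).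
- move=> n x ys zs; case: (hs x) => y <-; case: (sT _ ys) => ys' ->; case: (sT _ zs) => zs' ->.
  by rewrite -(map_cqt hf) -!(hom_cq hf) C5.
- move=> s xs n ys; case: (sT _ xs) => xs' ->; case: (sT _ ys) => ys' ->.
  by rewrite -(map_cqt' hf) -(hom_cop hf) -(hom_cq hf) -(hom_cop hf) C6.
Qed.

Lemma nth_mk (T : Type) n (f : 'I_n -> T) x0 k (hk : k < n) :
  nth x0 [tuple f i | i < n] k = f (Ordinal hk).
Proof. by rewrite -[k]/(nat_of_ord (Ordinal hk)) -tnth_nth tnth_mktuple. Qed.

Lemma nth_tdef (T : Type) n (t : n.-tuple T) x0 j : n <= j -> nth x0 t j = x0.
Proof. by move=> h; rewrite nth_default // size_tuple. Qed.

Section FunAlg.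
Variables (t : alg_type) (A : algebra t) (D : (nat -> A) -> Prop)
  (HD : forall s n (xs : n.-tuple A), D s -> D (upd s xs)).
Notation F := (fun_alg HD).
Definition pupd (s : {s | D s}) n (xs : n.-tuple A) : {s | D s} :=
  exist D (upd (proj1_sig s) xs) (HD xs (proj2_sig s)).

Lemma pupd_val s n (xs : n.-tuple A) : proj1_sig (pupd s xs) = upd (proj1_sig s) xs.
Proof. by []. Qed.

Lemma fa_cq n (f : F) (gs : n.-tuple F) s :
  (cq n f gs : {s | D s} -> A) s = (f : {s | D s} -> A) (pupd s (map_tuple (fun g : F => (g : {s | D s} -> A) s) gs)).
Proof. by congr f; apply: sig_eq. Qed.
Lemma fa_ce k s : (ce F k : {s | D s} -> A) s = proj1_sig s k.
Proof. by []. Qed.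
Lemma fa_cop sg (fs : (arity sg).-tuple F) s :
  (cop sg fs : {s | D s} -> A) s = interp A sg (map_tuple (fun g : F => (g : {s | D s} -> A) s) fs).
Proof. by []. Qed.

Lemma CA_fun : CA F.
Proof.
split; [|split; [|split; [|split; [|split]]]].
- move=> n xs j; apply: functional_extensionality => s.
  rewrite fa_cq fa_ce /= /upd (nth_map (ce F 0)) ?size_tuple //.
  by rewrite (tnth_nth (ce F 0)).
- move=> n xs j hj; apply: functional_extensionality => s.
  by rewrite fa_cq fa_ce /= /upd nth_default // size_map size_tuple.
- move=> n x; apply: functional_extensionality => s.
  rewrite fa_cq; congr x; apply: sig_eq => /=.
  apply: functional_extensionality => k; rewrite /upd.
  case: (ltnP k n) => hk.
    by rewrite (nth_map (ce F 0)) ?size_tuple // (nth_mk _ _ hk).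
  by rewrite nth_default // size_map size_tuple.
- move=> k n x ys hk; apply: functional_extensionality => s.
  rewrite !fa_cq; congr x; apply: sig_eq => /=.
  apply: functional_extensionality => j; rewrite /upd.
  case: (ltnP j n) => hj.
    rewrite [in RHS](nth_map (ce F 0)) ?size_tuple //.
    have -> : nth (ce F 0) [tuple nth (ce F i) ys i | i < n] j = nth (ce F j) ys j.
      by rewrite (nth_mk _ _ hj).
    case: (ltnP j k) => hjk.
      by rewrite (nth_map (ce F 0)) ?size_tuple // (set_nth_default (ce F 0)) // size_tuple.
    by rewrite !nth_default ?size_map ?size_tuple.
  have hkj : k <= j by exact: leq_trans (ltnW hk) hj.
  by rewrite !nth_tdef.
- move=> n x ys zs; apply: functional_extensionality => s.
  rewrite !fa_cq; congr x; apply: sig_eq; rewrite !pupd_val.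
  apply: functional_extensionality => j; rewrite /upd.
  case: (ltnP j n) => hj.
    rewrite !(nth_map (ce F 0)) ?size_map ?size_tuple // fa_cq.
    by apply: (congr1 (nth (ce F 0) ys j)); apply: sig_eq.
  by rewrite !nth_tdef.
- move=> sg xs n ys; apply: functional_extensionality => s.
  rewrite fa_cq !fa_cop; congr (interp A sg _).
  by apply: eq_from_tnth => i; rewrite !tnth_map fa_cq.
Qed.
End FunAlg.

Section SubAlg.
Variables (T : alg_type) (A : algebra T) (P : A -> Prop)
  (HP : forall o (xs : (arity o).-tuple A), (forall i, P (tnth xs i)) -> P (interp A o xs)).
Lemma sub_closed o (xs : (arity o).-tuple {x | P x}) :
  P (interp A o (map_tuple (@proj1_sig _ _) xs)).
Proof. by apply: HP => i; rewrite tnth_map; exact: proj2_sig. Qed.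
Definition sub_alg : algebra T :=
  @Algebra T {x | P x} (fun o xs => exist P _ (sub_closed xs)).
Lemma sub_val_hom : is_hom (fun x : sub_alg => proj1_sig x : A).
Proof. by []. Qed.
Lemma sub_val_inj : injective (fun x : sub_alg => proj1_sig x : A).
Proof. by move=> x y; apply: sig_eq. Qed.
End SubAlg.

Lemma proj_hom T (I : Type) (A : I -> algebra T) i :
  is_hom (fun x : prod_alg A => x i : A i).
Proof. by []. Qed.

Lemma prod_inj T (I : Type) (A : I -> algebra T) (x y : prod_alg A) :
  (forall i, x i = y i) -> x = y.
Proof. exact: functional_extensionality_dep. Qed.

Lemma id_hom T (A : algebra T) : is_hom (fun x : A => x).
Proof. by move=> o xs; congr (interp A o _); apply: eq_from_tnth => i; rewrite tnth_map. Qed.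

Lemma comp_hom T (A B C : algebra T) (f : A -> B) (g : B -> C) :
  is_hom f -> is_hom g -> is_hom (fun x => g (f x)).
Proof.
move=> hf hg o xs; rewrite hf hg; congr (interp C o _).
by apply: eq_from_tnth => i; rewrite !tnth_map.
Qed.

Lemma bij_surj (A B : Type) (f : A -> B) : bijective f -> forall b, exists a, f a = b.
Proof. by case=> g _ gK b; exists (g b). Qed.

Lemma CA_sub1 t (B A : algebra (clone_type t)) (f : B -> A) :
  is_hom f -> injective f -> CA A -> CA B.
Proof.
move=> hf inj hA; apply: (@CA_sub _ B unit (fun _ => A) (fun _ => f)) => // x y.
by move/(_ tt); apply: inj.
Qed.

Lemma CA_prod t (I : Type) (A : I -> algebra (clone_type t)) :
  (forall i, CA (A i)) -> CA (prod_alg A).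
Proof.
move=> hA; apply: (@CA_sub _ (prod_alg A) I A (fun i (x : prod_alg A) => x i)) => // x y.
exact: prod_inj.
Qed.

Definition evn (Q : nat -> Prop) := exists N, forall k, N <= k -> Q k.
Lemma evn_mono (Q Q' : nat -> Prop) : (forall k, Q k -> Q' k) -> evn Q -> evn Q'.
Proof. by move=> h [N hN]; exists N => k /hN /h. Qed.
Lemma evn_and (Q Q' : nat -> Prop) : evn Q -> evn Q' -> evn (fun k => Q k /\ Q' k).
Proof.
move=> [N hN] [M hM]; exists (maxn N M) => k hk; split.
  by apply: hN; apply: leq_trans hk; apply: leq_maxl.
by apply: hM; apply: leq_trans hk; apply: leq_maxr.
Qed.
Lemma evn_ge n : evn (fun k => n <= k).
Proof. by exists n. Qed.
Lemma evn_nat m (Q : nat -> nat -> Prop) :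
  (forall i, i < m -> evn (Q i)) -> evn (fun k => forall i, i < m -> Q i k).
Proof.
elim: m Q => [|m IH] Q h; first by exists 0.
have [N hN] := IH Q (fun i hi => h i (ltnW hi)).
have [M hM] := h m (ltnSn m).
exists (maxn N M) => k hk i; rewrite ltnS leq_eqVlt; case/orP.
  by move/eqP->; apply: hM; apply: leq_trans hk; apply: leq_maxr.
by move=> hi; apply: hN => //; apply: leq_trans hk; apply: leq_maxl.
Qed.
Lemma evn_ord m (Q : 'I_m -> nat -> Prop) :
  (forall i, evn (Q i)) -> evn (fun k => forall i, Q i k).
Proof.
move=> h.
have := @evn_nat m (fun i k => forall hi : i < m, Q (Ordinal hi) k).
case=> [i hi|N hN]; first by apply: evn_mono (h (Ordinal hi)) => k q hi'; rewrite (bool_irrelevance hi' hi).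
by exists N => k hk [i hi]; apply: hN.
Qed.

Section Core.
Variables (t : alg_type) (C : algebra (clone_type t)) (hC : CA C).

Lemma core n N (a : C) (bs : n.-tuple C) (u : N.-tuple C) : n < N ->
  cq N (cq n a bs) u =
  cq N a [tuple (if i < n then cq N (nth a bs i) u else tnth u i) | i < N].
Proof.
case: hC => C1 [C2 [C3 [C4 [C5 C6]]]] hn.
rewrite (C4 n N) // C5; congr cq; apply: eq_from_tnth => i.
rewrite tnth_map !tnth_mktuple; case: ifP => hi.
  by rewrite (set_nth_default a) ?size_tuple.
by rewrite nth_default ?C1 // size_tuple leqNgt hi.
Qed.
End Core.

Section PartC.
Variables (t : alg_type) (C : algebra (clone_type t)) (hC : CA C).
Definition Ct : algebra t := @Algebra t C (fun sg xs => cop sg xs).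
Notation FF := (full_fca Ct).
Notation Pt := {s : nat -> Ct | True}.

Definition dep (f : FF) n := forall s s' : Pt,
  (forall i, i < n -> proj1_sig s i = proj1_sig s' i) -> (f : Pt -> Ct) s = (f : Pt -> Ct) s'.
Lemma dep_mono f n m : n <= m -> dep f n -> dep f m.
Proof. by move=> hnm h s s' hs; apply: h => i hi; apply: hs; apply: leq_trans hnm. Qed.
Definition depP (f : FF) := evn (dep f).

Lemma FF_cq n (f : FF) (gs : n.-tuple FF) s :
  (cq n f gs : Pt -> Ct) s = (f : Pt -> Ct) (pupd (@upd_True Ct) s (map_tuple (fun g : FF => (g : Pt -> Ct) s) gs)).
Proof. exact: fa_cq. Qed.

Lemma dep_closed o (xs : (arity o).-tuple FF) :
  (forall i, depP (tnth xs i)) -> depP (interp FF o xs).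
Proof.
move=> h; have hk := evn_ord h.
case: o xs h hk => [sg|[n|k]] xs h hk.
- apply: evn_mono hk => k hk' s s' hs /=; congr (cop sg _).
  by apply: eq_from_tnth => i; rewrite !tnth_map; apply: hk'.
- apply: evn_mono (evn_and hk (evn_ge n)) => k [hk' hnk].
  move: hk'; case/tupleP: xs h hk => f gs _ _ hk s s' hs.
  change ((cq n f gs : Pt -> Ct) s = (cq n f gs : Pt -> Ct) s').
  rewrite !FF_cq; apply: (hk ord0) => i hi /=.
  have -> : map_tuple (fun g : FF => (g : Pt -> Ct) s) gs = map_tuple (fun g : FF => (g : Pt -> Ct) s') gs.
    apply: eq_from_tnth => j; rewrite !tnth_map.
    by have := hk (lift ord0 j); rewrite tnthS; apply.
  rewrite /upd; case: (ltnP i n) => hin.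
    by rewrite (set_nth_default (sval s' i)) ?size_tuple.
  by rewrite !nth_tdef // hs.
- by exists k.+1 => j hj s s' hs /=; apply: hs; apply: leq_trans hj.
Qed.

Definition Fin := sub_alg dep_closed.
Let vF := fun x : Fin => proj1_sig x : FF.

Lemma Fin_FiCA : FiCA Fin.
Proof.
split.
  exact: (CA_sub1 (@sub_val_hom _ _ _ dep_closed) (@sub_val_inj _ _ _ dep_closed) (CA_fun _)).
move=> a; case: (proj2_sig a) => N hN; exists N => k hk.
apply: (@sub_val_inj _ _ _ dep_closed).
rewrite (hom_cq (@sub_val_hom _ _ _ dep_closed)).
apply: functional_extensionality => s; rewrite FF_cq.
apply: (hN k hk) => i hi /=; rewrite /upd.
set T := (X in map_tuple _ (map_tuple _ X)).
have -> : map_tuple (fun g : FF => (g : Pt -> Ct) s) (map_tuple (fun x : Fin => proj1_sig x : FF) T)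
   = [tuple (if i0 < k then proj1_sig s i0 else proj1_sig s k.+1) | i0 < k.+1].
  apply: eq_from_tnth => j; rewrite !tnth_map /T.
  by case: ifP.
by rewrite (nth_mk _ _ (leq_trans hi (leqnSn k))) /= hi.
Qed.

Lemma Fin_BLK : BLK Fin.
Proof.
exists Ct, vF; split; first exact: (@sub_val_hom _ _ _ dep_closed).
split; first exact: (@sub_val_inj _ _ _ dep_closed).
move=> b; case: (proj2_sig b) => N hN; exists N.
exists (fun xs => (vF b : Pt -> Ct) (exist _ (fun i => nth (ce C 0) xs i) I)) => s.
apply: (hN N (leqnn N)) => i hi /=.
by rewrite (nth_mk _ _ hi).
Qed.

Definition apf (a : C) N : FF := fun s : Pt => cq N a [tuple proj1_sig s i | i < N].
Lemma apf_dep a N : dep (apf a N) N.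
Proof.
move=> s s' hs; rewrite /apf; congr cq; apply: eq_from_tnth => i.
by rewrite !tnth_mktuple hs.
Qed.
Definition ap a N : Fin :=
  exist _ (apf a N) (ex_intro _ N (fun k hk => @dep_mono (apf a N) N k hk (@apf_dep a N))).


Lemma vF_hom : is_hom vF.
Proof. exact: (@sub_val_hom _ _ _ dep_closed). Qed.
Lemma vF_inj : injective vF.
Proof. exact: (@sub_val_inj _ _ _ dep_closed). Qed.

Lemma ap_hom o (as_ : (arity o).-tuple C) :
  evn (fun N => interp Fin o (map_tuple (ap^~ N) as_) = ap (interp C o as_) N).
Proof.
case: hC => C1 [C2 [C3 [C4 [C5 C6]]]].
case: o as_ => [sg|[n|k]] as_.
- exists 0 => N _; apply: vF_inj; apply: functional_extensionality => s.
  rewrite /vF /= /apf.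
  change (interp C (inl sg) as_) with (cop sg as_); rewrite C6.
  change (cop sg (map_tuple (fun g : FF => (g : Pt -> Ct) s)
     (map_tuple (fun x : Fin => proj1_sig x : FF) (map_tuple (ap^~ N) as_))) =
     cop sg (map_tuple (fun x => cq N x [tuple sval s i | i < N]) as_)).
  by congr cop; apply: eq_from_tnth => i; rewrite !tnth_map.
- case/tupleP: as_ => a bs.
  exists n.+1 => N hN; apply: vF_inj; apply: functional_extensionality => s.
  have -> : map_tuple (ap^~ N) [tuple of a :: bs] = [tuple of ap a N :: map_tuple (ap^~ N) bs].
    exact: val_inj.
  change ((vF (cq n (ap a N) (map_tuple (ap^~ N) bs)) : Pt -> Ct) s =
          apf (cq n a bs) N s).
  rewrite (hom_cq vF_hom) FF_cq /apf (core hC) //; congr cq.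
  have -> : map_tuple (fun g : FF => (g : Pt -> Ct) s) (map_tuple vF (map_tuple (ap^~ N) bs))
     = map_tuple (fun b => cq N b [tuple sval s i0 | i0 < N]) bs.
    by apply: eq_from_tnth => i; rewrite !tnth_map.
  apply: eq_from_tnth => i; rewrite !tnth_mktuple pupd_val /upd.
  case: ifP => hi.
    by rewrite (nth_map a) ?size_tuple.
  by rewrite nth_tdef // leqNgt hi.
- have -> : as_ = [tuple] :> 0.-tuple C by apply: val_inj; apply: size0nil; rewrite size_tuple.
  exists k.+1 => N hN; apply: vF_inj.
  have -> : map_tuple (ap^~ N) [tuple] = [tuple] by apply: tuple0.
  change (vF (ce Fin k) = vF (ap (ce C k) N)).
  rewrite (hom_ce vF_hom); apply: functional_extensionality => s.
  rewrite fa_ce.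
  change (proj1_sig s k = cq N (ce C k) [tuple sval s i | i < N]).
  by rewrite (C1 _ _ (Ordinal hN)) tnth_mktuple.
Qed.

Notation PP := (prod_alg (fun _ : nat => Fin)).

Lemma S_op o (xs : (arity o).-tuple PP) (as_ : (arity o).-tuple C) :
  (forall i, evn (fun N => tnth xs i N = ap (tnth as_ i) N)) ->
  evn (fun N => interp PP o xs N = ap (interp C o as_) N).
Proof.
move=> h; apply: evn_mono (evn_and (evn_ord h) (ap_hom as_)) => N [h1 <-] /=.
by congr (interp Fin o _); apply: eq_from_tnth => i; rewrite !tnth_map h1.
Qed.

Definition Sp (x : PP) := exists a : C, evn (fun N => x N = ap a N).

Lemma Sp_closed o (xs : (arity o).-tuple PP) :
  (forall i, Sp (tnth xs i)) -> Sp (interp PP o xs).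
Proof.
move=> h.
pose as_ := [tuple proj1_sig (constructive_indefinite_description _ (h i)) | i < arity o].
exists (interp C o as_); apply: S_op => i; rewrite tnth_mktuple.
by case: constructive_indefinite_description.
Qed.

Definition Sub := sub_alg Sp_closed.

Lemma ap_uniq a b : evn (fun N => ap a N = ap b N) -> a = b.
Proof.
case: hC => C1 [C2 [C3 [C4 [C5 C6]]]].
case=> N hN; have := hN N (leqnn N).
move/(congr1 (fun x : Fin => ((proj1_sig x : FF) : Pt -> Ct) (exist _ (fun i => ce C i) I))).
by rewrite /= /apf /= !C3.
Qed.

Definition hS (x : Sub) : C := proj1_sig (constructive_indefinite_description _ (proj2_sig x)).
Lemma hS_spec x : evn (fun N => proj1_sig x N = ap (hS x) N).
Proof. by rewrite /hS; case: constructive_indefinite_description. Qed.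

Lemma hS_hom : is_hom hS.
Proof.
move=> o xs; apply: ap_uniq.
have e1 := hS_spec (interp Sub o xs).
have e2 := @S_op o (map_tuple (fun x : Sub => proj1_sig x) xs) (map_tuple hS xs).
have e2' := e2 (fun i => eq_ind_r (fun y => evn (fun N => tnth (map_tuple (fun x : Sub => proj1_sig x) xs) i N = ap y N)) (eq_ind_r (fun z : PP => evn (fun N => z N = ap (hS (tnth xs i)) N)) (hS_spec (tnth xs i)) (tnth_map _ _ _)) (tnth_map _ _ _)).
by apply: evn_mono (evn_and e1 e2') => N [h1 h2]; rewrite -h1 -h2.
Qed.

Lemma hS_surj : forall a, exists x, hS x = a.
Proof.
move=> a.
have hx : Sp (fun N => ap a N) by exists a; exists 0.
exists (exist _ _ hx); apply: ap_uniq.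
by apply: evn_mono (hS_spec (exist _ _ hx)) => N /= <-.
Qed.

Lemma PP_pcl (K : alg_class (clone_type t)) : K Fin -> Pcl K PP.
Proof.
move=> hK; exists nat, (fun _ => Fin); split => //.
exists (fun x => x); split; first exact: id_hom.
by exists (fun x => x).
Qed.

Lemma partC (K : alg_class (clone_type t)) : K Fin -> Hcl (Scl (Pcl K)) C.
Proof.
move=> hK; exists Sub; split; last by exists hS; split; [exact: hS_hom | exact: hS_surj].
exists PP; split; first exact: PP_pcl.
exists (fun x : Sub => proj1_sig x : PP); split.
  exact: (@sub_val_hom _ _ _ Sp_closed).
exact: (@sub_val_inj _ _ _ Sp_closed).
Qed.

End PartC.

Section PartB.
Variables (t : alg_type) (C : algebra (clone_type t)) (hC : CA C).

Definition ev (x y : nat -> C) := evn (fun k => x k = y k).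
Lemma ev_refl x : ev x x. Proof. by exists 0. Qed.
Lemma ev_sym x y : ev x y -> ev y x. Proof. by apply: evn_mono. Qed.
Lemma ev_trans x y z : ev x y -> ev y z -> ev x z.
Proof. by move=> h1 h2; apply: evn_mono (evn_and h1 h2) => k [-> ->]. Qed.
Lemma ev_eqP x y : ev x y -> ev x = ev y.
Proof.
move=> h; apply: functional_extensionality => z; apply: propositional_extensionality.
split=> h'; [exact: ev_trans (ev_sym h) h' | exact: ev_trans h h'].
Qed.

Definition canonP (P : (nat -> C) -> Prop) : nat -> C :=
  match excluded_middle_informative (exists c, P (fun _ => c)) with
  | left _ => fun _ => epsilon (inhabits (ce C 0)) (fun c => P (fun _ => c))
  | right _ => epsilon (inhabits (fun _ => ce C 0)) P
  end.
Definition canon x := canonP (ev x).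

Lemma canon_ev x : ev (canon x) x.
Proof.
rewrite /canon /canonP; case: excluded_middle_informative => h.
  exact: ev_sym (epsilon_spec (inhabits (ce C 0)) (fun c => ev x (fun _ => c)) h).
exact: ev_sym (epsilon_spec (inhabits (fun _ => ce C 0)) (ev x) (ex_intro _ x (ev_refl x))).
Qed.
Lemma canon_eq x y : ev x y -> canon x = canon y.
Proof. by move=> h; rewrite /canon (ev_eqP h). Qed.
Lemma canon_const c : canon (fun _ => c) = fun _ => c.
Proof.
rewrite /canon /canonP; case: excluded_middle_informative => h; last first.
  by exfalso; apply: h; exists c; apply: ev_refl.
apply: functional_extensionality => k.
have [N hN] := epsilon_spec (inhabits (ce C 0)) (fun c0 => ev (fun _ => c) (fun _ => c0)) h.
by rewrite -(hN N (leqnn N)).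
Qed.
Lemma canon_idem x : canon (canon x) = canon x.
Proof. exact: canon_eq (canon_ev x). Qed.

Definition Bc := {x : nat -> C | canon x = x}.
Definition cls (x : nat -> C) : Bc := exist _ (canon x) (canon_idem x).
Lemma cls_val (b : Bc) : cls (proj1_sig b) = b.
Proof. by apply: sig_eq; exact: (proj2_sig b). Qed.
Lemma cls_eq x y : ev x y -> cls x = cls y.
Proof. by move=> h; apply: sig_eq; apply: canon_eq. Qed.

Definition Bt : algebra t :=
  @Algebra t Bc (fun sg bs => cls (fun j => cop sg (map_tuple (fun b : Bc => proj1_sig b j) bs))).
Notation FB := (full_fca Bt).
Notation PB := {s : nat -> Bt | True}.

Definition Tp (s : PB) j : j.-tuple C := [tuple proj1_sig (proj1_sig s i : Bc) j | i < j].
Definition phi (a : C) : FB := fun s : PB => cls (fun j => cq j a (Tp s j)).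

Lemma phi_spec a s : evn (fun j => proj1_sig ((phi a : PB -> Bt) s : Bc) j = cq j a (Tp s j)).
Proof. exact: canon_ev. Qed.

Lemma phi_hom : is_hom phi.
Proof.
case: hC => C1 [C2 [C3 [C4 [C5 C6]]]].
move=> o as_; apply: functional_extensionality => s.
case: o as_ => [sg|[n|k]] as_.
- change (cls (fun j => cq j (cop sg as_) (Tp s j)) =
    cls (fun j => cop sg (map_tuple (fun b : Bc => proj1_sig b j)
       (map_tuple (fun f : FB => (f : PB -> Bt) s) (map_tuple phi as_))))).
  apply: cls_eq.
  apply: evn_mono (evn_ord (fun i => phi_spec (tnth as_ i) s)) => j hj.
  rewrite C6; congr cop; apply: eq_from_tnth => i.
  by rewrite !tnth_map hj.
- case/tupleP: as_ => a bs.
  have -> : map_tuple phi [tuple of a :: bs] = [tuple of phi a :: map_tuple phi bs].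
    exact: val_inj.
  change ((phi (cq n a bs) : PB -> Bt) s = (cq n (phi a) (map_tuple phi bs) : PB -> Bt) s).
  rewrite fa_cq; apply: cls_eq.
  have hb := @evn_nat n (fun i j => proj1_sig ((phi (nth a bs i) : PB -> Bt) s : Bc) j
                                = cq j (nth a bs i) (Tp s j)) (fun i _ => phi_spec _ s).
  apply: evn_mono (evn_and hb (evn_ge n.+1)) => j [hj hnj].
  rewrite (core hC) //; congr cq.
  apply: eq_from_tnth => i; rewrite !tnth_mktuple pupd_val /upd.
  case: ifP => hi.
    rewrite (nth_map (phi a)) ?size_tuple //.
    by rewrite (nth_map a) ?size_tuple // hj.
  by rewrite nth_tdef // leqNgt hi.
- have -> : as_ = [tuple] :> 0.-tuple C by apply: val_inj; apply: size0nil; rewrite size_tuple.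
  change (cls (fun j => cq j (ce C k) (Tp s j)) = proj1_sig s k).
  rewrite -[RHS]cls_val; apply: cls_eq.
  exists k.+1 => j hj.
  by rewrite (C1 _ _ (Ordinal hj)) tnth_mktuple.
Qed.

Definition rB : nat -> Bt := fun i => cls (fun _ => ce C i).

Lemma phi_r a : (phi a : PB -> Bt) (exist _ rB I) = cls (fun _ => a).
Proof.
case: hC => C1 [C2 [C3 [C4 [C5 C6]]]].
rewrite /phi; congr cls; apply: functional_extensionality => j.
have -> : Tp (exist _ rB I) j = [tuple ce C i | i < j].
  apply: eq_from_tnth => i; rewrite !tnth_mktuple /=.
  by rewrite canon_const.
by rewrite C3.
Qed.

Lemma cls_const_inj a b : cls (fun _ => a) = cls (fun _ => b) -> a = b.
Proof.
move/(congr1 (fun x : Bc => proj1_sig x 0)) => /=.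
by rewrite !canon_const.
Qed.

Lemma phi_inj : injective phi.
Proof.
move=> a b /(congr1 (fun f : FB => (f : PB -> Bt) (exist _ rB I))).
by rewrite !phi_r; apply: cls_const_inj.
Qed.

Definition rho (F : FB) : full_rca Bt rB :=
  fun s : {s | rel_dom rB s} => (F : PB -> Bt) (exist _ (proj1_sig s) I).

Lemma rho_hom : is_hom rho.
Proof.
move=> o fs; apply: functional_extensionality => s.
case: o fs => [sg|[n|k]] fs.
- change (interp Bt sg (map_tuple (fun f : FB => (f : PB -> Bt) (exist _ (proj1_sig s) I)) fs) =
          interp Bt sg (map_tuple (fun f : full_rca Bt rB => (f : {s | rel_dom rB s} -> Bt) s) (map_tuple rho fs))).
  by congr (interp Bt sg _); apply: eq_from_tnth => i; rewrite !tnth_map.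
- case/tupleP: fs => f gs.
  have -> : map_tuple rho [tuple of f :: gs] = [tuple of rho f :: map_tuple rho gs].
    exact: val_inj.
  change ((cq n f gs : PB -> Bt) (exist _ (proj1_sig s) I) =
          (cq n (rho f) (map_tuple rho gs) : {s | rel_dom rB s} -> Bt) s).
  rewrite !fa_cq /rho; congr f; apply: sig_eq; rewrite !pupd_val /=; congr upd.
  by apply: eq_from_tnth => i; rewrite !tnth_map.
- by [].
Qed.

Lemma partB : Icl (@RCA t) C /\ Icl (@FCA t) C.
Proof.
split; exists C; (split; last by exists (fun x => x); split; [exact: id_hom | exists (fun x => x)]).
- exists Bt, rB, (fun a => rho (phi a)); split; first exact: comp_hom phi_hom rho_hom.
  move=> a b /(congr1 (fun f : full_rca Bt rB => (f : {s | rel_dom rB s} -> Bt)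
                 (exist _ rB (ex_intro _ 0 (fun _ _ => erefl))))).
  by rewrite /rho /= !phi_r; apply: cls_const_inj.
- by exists Bt, phi; split; [exact: phi_hom | exact: phi_inj].
Qed.
End PartB.

Lemma Icl_CA t (K : alg_class (clone_type t)) (C : algebra (clone_type t)) :
  (forall A, K A -> CA A) -> Icl K C -> CA C.
Proof.
move=> hK [A [hA [f [hf bf]]]].
exact: CA_img hf (bij_surj bf) (hK _ hA).
Qed.

Lemma HSP_CA t (K : alg_class (clone_type t)) (C : algebra (clone_type t)) :
  (forall A, K A -> CA A) -> Hcl (Scl (Pcl K)) C -> CA C.
Proof.
move=> hK [A [[A' [[I [Ai [hAi [g [hg bg]]]]] [f [hf injf]]]] [h [hh sh]]]].
apply: CA_img hh sh _.
apply: CA_sub1 hf injf _.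
apply: CA_img hg (bij_surj bg) _.
by apply: CA_prod => i; apply: hK.
Qed.

Theorem theorem9p5 (t : alg_type) (C : algebra (clone_type t)) :
  (CA C <-> Icl (@RCA t) C) /\
  (CA C <-> Icl (@FCA t) C) /\
  (CA C <-> Hcl (Scl (Pcl (@FiCA t))) C) /\
  (CA C <-> Hcl (Scl (Pcl (@BLK t))) C).
Proof.
split; [|split; [|split]]; split.
- by move=> hC; case: (partB hC).
- apply: Icl_CA => A [B [r [f [hf injf]]]].
  exact: CA_sub1 hf injf (CA_fun _).
- by move=> hC; case: (partB hC).
- apply: Icl_CA => A [B [f [hf injf]]].
  exact: CA_sub1 hf injf (CA_fun _).
- by move=> hC; exact: (partC hC (Fin_FiCA C)).
- by apply: HSP_CA => A [].
- by move=> hC; exact: (partC hC (Fin_BLK C)).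
- apply: HSP_CA => A [B [f [hf [injf _]]]].
  exact: CA_sub1 hf injf (CA_fun _).
Qed.
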